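(* Let $d\ge 2$, $\mathcal{X}\in\mathbb{C}^{n_1\times\cdots\times n_d}$ and $0<\epsilon<1$. Suppose that for each $1\le j\le d-1$ there are matrices $U_j\in\mathbb{C}^{(\prod_{i=1}^j n_i)\times r_j}$ with orthonormal columns and $V_j\in\mathbb{C}^{(\prod_{i=j+1}^d n_i)\times r_j}$ such that $\|X_j-U_jV_j^*\|_F\le \frac{\epsilon}{\sqrt{d-1}}\|\mathcal{X}\|_F$, where $X_j$ is the $j$th unfolding of $\mathcal{X}$. Set $r_0=r_d=1$ and define TT cores $\mathcal{G}_1=\operatorname{reshape}(U_1,1,n_1,r_1)$, $\mathcal{G}_d=\operatorname{reshape}(V_{d-1}^*,r_{d-1},n_d,1)$, and for $1\le k\le d-2$ \[\mathcal{G}_{k+1}=\operatorname{reshape}\Big(U_k^*\,\operatorname{reshape}\big(U_{k+1},\textstyle\prod_{i=1}^k n_i,\ n_{k+1}r_{k+1}\big),\ r_k,\ n_{k+1},\ r_{k+1}\Big).\] Then the tensor $\tilde{\mathcal{X}}$ with TT cores $\mathcal{G}_1,\dots,\mathcal{G}_d$ satisfies $\|\mathcal{X}-\tilde{\mathcal{X}}\|_F\le\epsilon\|\mathcal{X}\|_F$.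
   Context: $\operatorname{reshape}$ follows MATLAB semantics (column-major ordering preserved). The $j$th unfolding of $\mathcal{X}\in\mathbb{C}^{n_1\times\cdots\times n_d}$ is $X_j=\operatorname{reshape}(\mathcal{X},\prod_{s=1}^j n_s,\prod_{s=j+1}^d n_s)$. A tensor $\mathcal{Y}$ has TT cores $\mathcal{G}_k\in\mathbb{C}^{s_{k-1}\times n_k\times s_k}$ ($s_0=s_d=1$) if $\mathcal{Y}_{i_1,\dots,i_d}=\mathcal{G}_1(:,i_1,:)\mathcal{G}_2(:,i_2,:)\cdots\mathcal{G}_d(:,i_d,:)$ (a product of matrices) for all indices. $\|\cdot\|_F$ is the Frobenius norm (square root of the sum of squared moduli of all entries). *)

(* Defs.v *)
(* Complex scalars: an arbitrary numClosedFieldType C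
   (e.g. C = R[i] for R : realType, i.e. the complex numbers). *)
From HB Require Import structures.
From mathcomp Require Import all_boot all_order all_algebra.
Set Implicit Arguments. Unset Strict Implicit. Unset Printing Implicit Defensive.
Import Order.TTheory GRing.Theory Num.Theory.
Local Open Scope ring_scope.

Section TT.
Variable C : numClosedFieldType.

Definition adjmx m n (A : 'M[C]_(m, n)) : 'M[C]_(n, m) := (map_mx Num.conj A)^T.

(* Linear (column-major, MATLAB) data of arrays are stored as nat -> C;
   only the first (size) entries are meaningful.
   Since MATLAB reshape preserves column-major order, reshape is:
   - from a matrix to linear data: [vecmx]
   - from linear data to an m x n matrix: [mxof m n]. *)
Definition vecmx m n (A : 'M[C]_(m, n)) : nat -> C :=
  fun L => \sum_(a < m) \sum_(b < n) (if (a + m * b)%N == L then A a b else 0).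

Definition mxof m n (x : nat -> C) : 'M[C]_(m, n) :=
  \matrix_(a < m, b < n) x (a + m * b)%N.

Definition Pn (n : nat -> nat) (j : nat) : nat := (\prod_(1 <= i < j.+1) n i)%N.
Definition Qn (n : nat -> nat) (d j : nat) : nat := (\prod_(j.+1 <= i < d.+1) n i)%N.

Definition unfolding (n : nat -> nat) (d : nat) (X : nat -> C) (j : nat) :
  'M[C]_(Pn n j, Qn n d j) := mxof (Pn n j) (Qn n d j) X.

Definition frobmx m n (A : 'M[C]_(m, n)) : C :=
  sqrtC (\sum_(a < m) \sum_(b < n) `|A a b| ^+ 2).
Definition frobT (n : nat -> nat) (d : nat) (X : nat -> C) : C :=
  sqrtC (\sum_(L < Pn n d) `|X L| ^+ 2).

(* TT tensor with cores G k (k = 1..d), G k in C^{s(k-1) x n_k x s k}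
   stored as linear column-major data. *)
Section TTeval.
Variables (n : nat -> nat) (s : nat -> nat) (G : nat -> nat -> C).

Definition ttslice (k i : nat) : 'M[C]_(s k.-1, s k) :=
  \matrix_(a < s k.-1, b < s k) G k (a + s k.-1 * i + s k.-1 * n k * b)%N.

(* multi-index of linear position L (0-based, column-major): i_k *)
Definition ttidx (L k : nat) : nat := ((L %/ Pn n k.-1) %% n k)%N.

Fixpoint ttpref (L k : nat) : 'M[C]_(1, s k) :=
  match k return 'M[C]_(1, s k) with
  | 0 => const_mx 1
  | k'.+1 => ttpref L k' *m ttslice k'.+1 (ttidx L k'.+1)
  end.

(* entry at linear position L; the 1 x s d matrix (s d = 1) is read off
   by summing its (single) entry *)
Definition tteval (d : nat) (L : nat) : C := \sum_(b < s d) ttpref L d 0 b.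
End TTeval.

Definition rk (d : nat) (r : nat -> nat) (k : nat) : nat :=
  if (k == 0)%N || (k == d)%N then 1%N else r k.

Definition thm_cores (n : nat -> nat) (d : nat) (r : nat -> nat)
  (U : forall j, 'M[C]_(Pn n j, r j)) (V : forall j, 'M[C]_(Qn n d j, r j))
  (k : nat) : nat -> C :=
  if k == 1%N then vecmx (U 1%N)
  else if k == d then vecmx (adjmx (V d.-1))
  else vecmx (adjmx (U k.-1) *m mxof (Pn n k.-1) (n k * r k) (vecmx (U k))).

End TT.

(* Main.v *)
Require Import Defs.
From mathcomp Require Import all_boot all_order all_algebra zify.
Import Order.TTheory GRing.Theory Num.Theory.
Local Open Scope ring_scope.
Set Implicit Arguments. Unset Strict Implicit. Unset Printing Implicit Defensive.

Lemma idx_mod p i j : (i < p)%N -> ((i + p * j) %% p = i)%N.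
Proof. by move=> Hi; rewrite addnC mulnC modnMDl modn_small. Qed.
Lemma idx_div p i j : (i < p)%N -> ((i + p * j) %/ p = j)%N.
Proof.
move=> Hi; have Hp : (0 < p)%N by apply: leq_ltn_trans Hi.
by rewrite addnC mulnC divnMDl // divn_small // addn0.
Qed.

Lemma idx_inj p i j a b : (i < p)%N -> (a < p)%N ->
  (i + p * j == a + p * b)%N = (i == a) && (j == b).
Proof.
move=> Hi Ha; apply/eqP/andP => [E|[/eqP-> /eqP->]] //.
have E1 := idx_mod j Hi; have E2 := idx_div j Hi.
by rewrite E idx_mod // in E1; rewrite E idx_div // in E2; rewrite E1 E2.
Qed.

Section Gen.
Variable C : numClosedFieldType.

Lemma vecmxE p q (A : 'M[C]_(p, q)) (a : 'I_p) (b : 'I_q) :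
  vecmx A (a + p * b)%N = A a b.
Proof.
rewrite /vecmx (bigD1 a) //= (bigD1 b) //= eqxx.
rewrite big1 ?addr0; last first.
  by move=> j /negPf Hj; rewrite idx_inj // eqxx /=; case: eqP => // /val_inj E; rewrite E eqxx in Hj.
rewrite big1 ?addr0 //.
move=> i Hi; apply: big1 => j _; rewrite idx_inj //.
by case: eqP => // /val_inj E; rewrite E eqxx in Hi.
Qed.

Lemma vecmxN p q (A : 'M[C]_(p, q)) a b (Ha : (a < p)%N) (Hb : (b < q)%N) :
  vecmx A (a + p * b)%N = A (Ordinal Ha) (Ordinal Hb).
Proof. exact: (vecmxE A (Ordinal Ha) (Ordinal Hb)). Qed.

Lemma vecmx_mxof p q (v : nat -> C) a b : (a < p)%N -> (b < q)%N ->
  vecmx (mxof p q v) (a + p * b)%N = v (a + p * b)%N.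
Proof. by move=> Ha Hb; rewrite (vecmxN _ Ha Hb) mxE. Qed.

Lemma vecmx_adj p q (A : 'M[C]_(p, q)) a b : (a < p)%N -> (b < q)%N ->
  vecmx (adjmx A) (b + q * a)%N = (vecmx A (a + p * b)%N)^*.
Proof. by move=> Ha Hb; rewrite (vecmxN _ Hb Ha) (vecmxN _ Ha Hb) !mxE. Qed.

Lemma vecmx_mul p q s (A : 'M[C]_(p, q)) (B : 'M[C]_(q, s)) a c :
  (a < p)%N -> (c < s)%N ->
  vecmx (A *m B) (a + p * c)%N =
  \sum_(0 <= b < q) vecmx A (a + p * b)%N * vecmx B (b + q * c)%N.
Proof.
move=> Ha Hc; rewrite (vecmxN _ Ha Hc) mxE big_mkord; apply: eq_bigr => b _.
by rewrite (vecmxE A (Ordinal Ha) b) (vecmxE B b (Ordinal Hc)).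
Qed.

Lemma sum_pq (F : nat -> C) p q :
  \sum_(0 <= L < p * q) F L = \sum_(0 <= b < q) \sum_(0 <= a < p) F (a + p * b)%N.
Proof.
elim: q => [|q IH]; first by rewrite muln0 !big_geq.
rewrite big_nat_recr //= -IH mulnS addnC (big_cat_nat _ (leq_addr _ _)) //=.
congr (_ + _); rewrite -{1}[(p * q)%N]add0n big_addn addKn.
done.
Qed.

Definition frob2 p q (A : 'M[C]_(p, q)) := \sum_(a < p) \sum_(b < q) `|A a b| ^+ 2.
Definition ip p q (A B : 'M[C]_(p, q)) := \sum_(a < p) \sum_(b < q) A a b * (B a b)^*.

Lemma frob2E p q (A : 'M[C]_(p, q)) : frob2 A = ip A A.
Proof. by apply: eq_bigr => a _; apply: eq_bigr => b _; rewrite normCK. Qed.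

Lemma frob2_ge0 p q (A : 'M[C]_(p, q)) : 0 <= frob2 A.
Proof. by apply: sumr_ge0 => a _; apply: sumr_ge0 => b _; rewrite exprn_ge0. Qed.

Lemma ipC p q (A B : 'M[C]_(p, q)) : ip B A = (ip A B)^*.
Proof.
rewrite /ip rmorph_sum; apply: eq_bigr => a _; rewrite rmorph_sum.
by apply: eq_bigr => b _; rewrite rmorphM /= conjCK mulrC.
Qed.

Lemma ipDl p q (A B D : 'M[C]_(p, q)) : ip (A + B) D = ip A D + ip B D.
Proof.
rewrite /ip -big_split; apply: eq_bigr => a _; rewrite -big_split.
by apply: eq_bigr => b _; rewrite mxE mulrDl.
Qed.

Lemma ipNl p q (A D : 'M[C]_(p, q)) : ip (- A) D = - ip A D.
Proof.
rewrite /ip -sumrN; apply: eq_bigr => a _; rewrite -sumrN.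
by apply: eq_bigr => b _; rewrite mxE mulNr.
Qed.

Lemma ip0l p q (D : 'M[C]_(p, q)) : ip 0 D = 0.
Proof. by rewrite /ip big1 // => a _; rewrite big1 // => b _; rewrite mxE mul0r. Qed.

Lemma ip0r p q (D : 'M[C]_(p, q)) : ip D 0 = 0.
Proof. by rewrite /ip big1 // => a _; rewrite big1 // => b _; rewrite mxE rmorph0 mulr0. Qed.

Lemma ip_mulmx p q s (M : 'M[C]_(p, q)) (A : 'M[C]_(q, s)) (B : 'M[C]_(p, s)) :
  ip (M *m A) B = ip A (adjmx M *m B).
Proof.
rewrite /ip.
transitivity (\sum_(a < p) \sum_(b < s) \sum_(c < q) M a c * A c b * (B a b)^*).
  by apply: eq_bigr => a _; apply: eq_bigr => b _; rewrite mxE big_distrl.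
transitivity (\sum_(c < q) \sum_(b < s) \sum_(a < p) M a c * A c b * (B a b)^*).
  rewrite exchange_big /=.
  transitivity (\sum_(b < s) \sum_(c < q) \sum_(a < p) M a c * A c b * (B a b)^*).
    by apply: eq_bigr => b _; rewrite exchange_big.
  by rewrite exchange_big.
apply: eq_bigr => c _; apply: eq_bigr => b _.
rewrite mxE rmorph_sum big_distrr; apply: eq_bigr => a _.
by rewrite !mxE rmorphM /= conjCK mulrCA mulrA.
Qed.

Lemma ipDr p q (A B D : 'M[C]_(p, q)) : ip D (A + B) = ip D A + ip D B.
Proof. by rewrite ipC ipDl rmorphD /= -!ipC. Qed.

Lemma frob2D p q (A B : 'M[C]_(p, q)) : ip A B = 0 ->
  frob2 (A + B) = frob2 A + frob2 B.
Proof.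
move=> H0; have H1 : ip B A = 0 by rewrite ipC H0 rmorph0.
by rewrite !frob2E ipDl !ipDr H0 H1 addr0 add0r.
Qed.

Lemma adjmxK p q (A : 'M[C]_(p, q)) : adjmx (adjmx A) = A.
Proof. by apply/matrixP => i j; rewrite !mxE conjCK. Qed.

Lemma adjmx_mul p q s (A : 'M[C]_(p, q)) (B : 'M[C]_(q, s)) :
  adjmx (A *m B) = adjmx B *m adjmx A.
Proof.
apply/matrixP => i j; rewrite !mxE rmorph_sum; apply: eq_bigr => k _.
by rewrite !mxE rmorphM mulrC.
Qed.

Lemma proj_orth p r0 s (U : 'M[C]_(p, r0)) (A : 'M[C]_(p, s)) (W : 'M[C]_(r0, s)) :
  adjmx U *m U = 1%:M ->
  ip (A - U *m (adjmx U *m A)) (U *m W) = 0.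
Proof.
move=> HU; rewrite ipC ip_mulmx mulmxBr [adjmx U *m (U *m _)]mulmxA HU mul1mx subrr.
by rewrite ip0r rmorph0.
Qed.

Section Proj.
Variables (p r0 s : nat) (U : 'M[C]_(p, r0)).
Hypothesis HU : adjmx U *m U = 1%:M.

Lemma proj_split (A W : 'M[C]_(p, s)) (Z : 'M[C]_(r0, s)) :
  W = U *m Z ->
  frob2 (A - W) = frob2 (A - U *m (adjmx U *m A)) + frob2 (U *m (adjmx U *m A) - W).
Proof.
move=> ->; rewrite -frob2D; first by congr frob2; rewrite addrA subrK.
by rewrite -mulmxBr; apply: proj_orth.
Qed.

Lemma proj_best (A : 'M[C]_(p, s)) (W : 'M[C]_(r0, s)) :
  frob2 (A - U *m (adjmx U *m A)) <= frob2 (A - U *m W).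
Proof. by rewrite [X in _ <= X](proj_split _ (erefl _)) lerDl frob2_ge0. Qed.

Lemma proj_contr (B : 'M[C]_(p, s)) : frob2 (U *m (adjmx U *m B)) <= frob2 B.
Proof.
have := proj_split B (W := 0) (Z := 0); rewrite mulmx0 => /(_ erefl).
rewrite !subr0 => ->; rewrite lerDr; exact: frob2_ge0.
Qed.

Lemma proj_step (A B : 'M[C]_(p, s)) :
  frob2 (A - U *m (adjmx U *m B)) <=
  frob2 (A - U *m (adjmx U *m A)) + frob2 (A - B).
Proof.
rewrite (proj_split _ (erefl _)) lerD2l -mulmxBr -mulmxBr.
exact: proj_contr.
Qed.
End Proj.

Lemma idx_lt a b p q : (a < p)%N -> (b < q)%N -> (a + p * b < p * q)%N.
Proof. nia. Qed.

Lemma sum_bound (F : nat -> C) k1 k2 : k1 = k2 ->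
  \sum_(0 <= i < k1) F i = \sum_(0 <= i < k2) F i.
Proof. by move->. Qed.
End Gen.

Section Main.
Variables (C : numClosedFieldType) (d : nat) (n : nat -> nat) (r : nat -> nat)
  (X : nat -> C) (U : forall j, 'M[C]_(Pn n j, r j)) (V : forall j, 'M[C]_(Qn n d j, r j)).
Hypothesis Hd : (2 <= d)%N.

Lemma Pn0 : Pn n 0 = 1%N.
Proof. by rewrite /Pn big_geq. Qed.
Lemma Pn1 : Pn n 1 = n 1%N.
Proof. by rewrite /Pn big_nat1. Qed.
Lemma PnS m : Pn n m.+1 = (Pn n m * n m.+1)%N.
Proof. by rewrite /Pn big_nat_recr. Qed.
Lemma QnS m : (m < d)%N -> Qn n d m = (n m.+1 * Qn n d m.+1)%N.
Proof. by move=> H; rewrite /Qn big_ltn. Qed.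
Lemma PQ m : (m <= d)%N -> (Pn n m * Qn n d m)%N = Pn n d.
Proof. by move=> H; rewrite /Pn /Qn -big_cat_nat. Qed.


Lemma mxofB p q (f g : nat -> C) :
  mxof p q (fun L => f L - g L) = mxof p q f - mxof p q g.
Proof. by apply/matrixP => i j; rewrite !mxE. Qed.
Lemma mxof_vecmx p q (A : 'M[C]_(p, q)) : mxof p q (vecmx A) = A.
Proof. by apply/matrixP => i j; rewrite mxE vecmxE. Qed.

Fixpoint Zt (t : nat) : nat -> C :=
  match t with
  | 0 => vecmx (U d.-1 *m adjmx (V d.-1))
  | t'.+1 => vecmx (U (d.-1 - t) *m (adjmx (U (d.-1 - t)) *m
                  mxof (Pn n (d.-1 - t)) (Qn n d (d.-1 - t)) (Zt t')))
  end.
Definition Zm m := Zt (d.-1 - m).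
Definition Rmx m : 'M[C]_(r m, Qn n d m) :=
  if (m < d.-1)%N then adjmx (U m) *m mxof (Pn n m) (Qn n d m) (Zm m.+1)
  else adjmx (V m).

Lemma Zm_eq m : (m <= d.-1)%N -> Zm m = vecmx (U m *m Rmx m).
Proof.
move=> Hm; rewrite /Rmx; case: ltnP => H.
  rewrite /Zm -(subnSK H) /=.
  have -> : (d.-1 - (d.-1 - m.+1).+1 = m)%N by rewrite subnSK // subKn.
  by rewrite mulmxA.
have E : m = d.-1 by apply/eqP; rewrite eqn_leq Hm H.
by rewrite /Zm E subnn.
Qed.

Lemma Zm_entry m c q : (m <= d.-1)%N -> (c < Pn n m)%N -> (q < Qn n d m)%N ->
  Zm m (c + Pn n m * q)%N =
  \sum_(0 <= b < r m) vecmx (U m) (c + Pn n m * b)%N * vecmx (Rmx m) (b + r m * q)%N.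
Proof. by move=> Hm Hc Hq; rewrite Zm_eq // vecmx_mul. Qed.

Lemma Rmx_entry m a q : (m < d.-1)%N -> (a < r m)%N -> (q < Qn n d m)%N ->
  vecmx (Rmx m) (a + r m * q)%N =
  \sum_(0 <= c < Pn n m) (vecmx (U m) (c + Pn n m * a)%N)^* * Zm m.+1 (c + Pn n m * q)%N.
Proof.
move=> Hm Ha Hq; rewrite /Rmx Hm vecmx_mul //; apply: eq_big_nat => c /andP[_ Hc].
by rewrite vecmx_adj // vecmx_mxof.
Qed.


Lemma vecmx_mul1 q s0 (A : 'M[C]_(1, q)) (B : 'M[C]_(q, s0)) c : (c < s0)%N ->
  vecmx (A *m B) c = \sum_(0 <= b < q) vecmx A b * vecmx B (b + q * c)%N.
Proof.
move=> Hc; have := vecmx_mul A B (ltn0Sn 0) Hc; rewrite add0n mul1n => ->.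
by apply: eq_big_nat => b _; rewrite add0n mul1n.
Qed.

Notation s := (rk d r).
Notation G := (thm_cores U V).
Definition tpn L m a := vecmx (ttpref n s G L m) a.

Lemma tteval_tpn L : tteval n s G d L = tpn L d 0.
Proof.
rewrite /tteval.
transitivity (\sum_(0 <= b < s d) tpn L d b).
  rewrite big_mkord; apply: eq_bigr => b _.
  by rewrite /tpn -(vecmxE _ ord0 b) /= add0n mul1n.
have E : s d = 1%N by rewrite /rk eqxx orbT.
by rewrite (sum_bound _ E) big_nat1.
Qed.

Lemma tpn_succ L m b : (b < s m.+1)%N ->
  tpn L m.+1 b = \sum_(0 <= a < s m) tpn L m a *
     G m.+1 (a + s m * ttidx n L m.+1 + s m * n m.+1 * b)%N.
Proof.
move=> Hb; rewrite /tpn /= vecmx_mul1 //; apply: eq_big_nat => a /andP[_ Ha].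
by rewrite (vecmxN (ttslice n s G m.+1 (ttidx n L m.+1)) Ha Hb) mxE.
Qed.


Lemma G1_entry i a :
  G 1%N (0 + s 0 * i + s 0 * n 1 * a)%N = vecmx (U 1%N) (i + Pn n 1 * a)%N.
Proof. by rewrite /thm_cores /=; apply: congr1; rewrite Pn1 add0n !mul1n. Qed.

Lemma Gd_entry a i :
  G d (a + s d.-1 * i + s d.-1 * n d * 0)%N = vecmx (Rmx d.-1) (a + r d.-1 * i)%N.
Proof.
have Hd1 : (d == 1%N) = false by apply/negbTE; rewrite neq_ltn Hd orbT.
have Hs : s d.-1 = r d.-1.
  rewrite /rk; case: d Hd {Hd1} => [|[|dd]] //= _.
  by rewrite ltn_eqF.
by rewrite /thm_cores Hd1 eqxx Hs /Rmx ltnn muln0 addn0.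
Qed.

Lemma Gmid_entry m a i b : (1 <= m)%N -> (m.+1 < d)%N ->
  (a < r m)%N -> (i < n m.+1)%N -> (b < r m.+1)%N ->
  G m.+1 (a + s m * i + s m * n m.+1 * b)%N =
  \sum_(0 <= c < Pn n m) (vecmx (U m) (c + Pn n m * a)%N)^* *
      vecmx (U m.+1) (c + Pn n m * i + Pn n m.+1 * b)%N.
Proof.
move=> H1 H2 Ha Hi Hb.
have Hs : s m = r m.
  rewrite /rk; case: m H1 H2 {Ha Hi Hb} => [|m] //= _ H2.
  by rewrite ltn_eqF // ltnW.
have E1 : (m.+1 == 1%N) = false by case: m H1 {H2 Ha Hi Hb Hs}.
have E2 : (m.+1 == d) = false by rewrite ltn_eqF.
rewrite /thm_cores E1 E2 /= Hs -mulnA -addnA -mulnDr vecmx_mul //; last first.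
  exact: idx_lt.
apply: eq_big_nat => c /andP[_ Hc].
rewrite vecmx_adj // vecmx_mxof //; last exact: idx_lt.
by congr (_ * vecmx _ _); rewrite PnS mulnDr mulnA addnA.
Qed.


Lemma s_mid m : (1 <= m)%N -> (m < d)%N -> s m = r m.
Proof.
move=> H1 H2; rewrite /rk; case: m H1 H2 => [|m] //= _ H2.
by rewrite ltn_eqF.
Qed.

Lemma Ppos L j : (L < Pn n d)%N -> (j <= d)%N -> (0 < Pn n j)%N /\ (0 < Qn n d j)%N.
Proof.
move=> HL Hj; have H0 : (0 < Pn n d)%N by apply: leq_ltn_trans HL.
by move: H0; rewrite -(PQ Hj) muln_gt0 => /andP.
Qed.

Lemma npos L m : (L < Pn n d)%N -> (m < d)%N -> (0 < n m.+1)%N.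
Proof.
move=> HL Hm; have [H _] := Ppos HL Hm.
by move: H; rewrite PnS muln_gt0 => /andP[].
Qed.

Lemma tt_claim k : forall m, (1 <= m)%N -> (m + k = d.-1)%N -> forall L, (L < Pn n d)%N ->
  tteval n s G d L = \sum_(0 <= a < r m) tpn L m a * vecmx (Rmx m) (a + r m * (L %/ Pn n m))%N.
Proof.
have Ed : d.-1.+1 = d by rewrite prednK // ltnW.
elim: k => [|k IH] m H1 Hmk L HL.
  rewrite addn0 in Hmk; subst m.
  rewrite tteval_tpn.
  have T := tpn_succ L (m := d.-1) (b := 0%N).
  rewrite Ed in T; rewrite T; last by rewrite /rk eqxx orbT.
  have Hdm : (d.-1 < d)%N by rewrite -{2}Ed.
  rewrite (sum_bound _ (s_mid H1 Hdm)); apply: eq_big_nat => a /andP[_ Ha].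
  congr (_ * _); rewrite Gd_entry /ttidx.
  have HP := PnS d.-1; rewrite Ed in HP.
  have [HP0 _] := Ppos HL (ltnW Hdm).
  rewrite modn_small // ltn_divLR // mulnC -HP //.
have Hm1 : (m.+1 + k = d.-1)%N by lia.
have Hmd : (m.+1 < d)%N by lia.
have Hmd' : (m < d.-1)%N by lia.
rewrite (IH m.+1 (ltn0Sn _) Hm1 L HL).
have [HPm HQm] := Ppos HL (ltnW (ltnW Hmd)).
have [HPm1 HQm1] := Ppos HL (ltnW Hmd).
have Hn := npos HL (ltnW Hmd).
set q' := (L %/ Pn n m.+1)%N.
set i := ttidx n L m.+1.
have Hi : (i < n m.+1)%N by rewrite /i /ttidx /= ltn_pmod.
have Hq' : (q' < Qn n d m.+1)%N by rewrite /q' ltn_divLR // mulnC (PQ (ltnW Hmd)).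
have Hq : (L %/ Pn n m < Qn n d m)%N by rewrite ltn_divLR // mulnC (PQ (ltnW (ltnW Hmd))).
have Eq : (L %/ Pn n m = i + n m.+1 * q')%N.
  rewrite /q' /i /ttidx /= PnS divnMA.
  by rewrite [in LHS](divn_eq (L %/ Pn n m) (n m.+1)) addnC mulnC.
transitivity (\sum_(0 <= b < r m.+1) \sum_(0 <= a < r m)
   tpn L m a * G m.+1 (a + s m * i + s m * n m.+1 * b)%N * vecmx (Rmx m.+1) (b + r m.+1 * q')%N).
  apply: eq_big_nat => b /andP[_ Hb].
  rewrite tpn_succ; last by rewrite (s_mid (ltn0Sn _) Hmd).
  by rewrite (sum_bound _ (s_mid H1 (ltnW Hmd))) big_distrl.
rewrite exchange_big_nat; apply: eq_big_nat => a /andP[_ Ha].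
under eq_big_nat => b /andP[_ Hb] do rewrite -mulrA.
rewrite -big_distrr; congr (_ * _).
rewrite Rmx_entry //.
under eq_big_nat => b /andP[_ Hb] do rewrite Gmid_entry // big_distrl.
rewrite exchange_big_nat; apply: eq_big_nat => c /andP[_ Hc].
have Ec : (c + Pn n m * (L %/ Pn n m) = (c + Pn n m * i) + Pn n m.+1 * q')%N.
  by rewrite Eq mulnDr addnA PnS mulnA.
rewrite Ec Zm_entry //; last by rewrite PnS; apply: idx_lt.
rewrite big_distrr; apply: eq_big_nat => b _.
by rewrite /= mulrA.
Qed.


Lemma tpn0 L : tpn L 0 0 = 1.
Proof. by rewrite /tpn -[0%N]/(@ord0 0 + 1 * @ord0 0)%N vecmxE mxE. Qed.

Lemma tt_Z L : (L < Pn n d)%N -> tteval n s G d L = Zm 1 L.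
Proof.
move=> HL.
have H1d : (1 < d)%N by [].
rewrite (tt_claim (k := (d.-1 - 1)%N) (m := 1%N) (ltnSn 0)); last 2 first.
- by lia.
- by [].
have [HP1 _] := Ppos HL (ltnW H1d).
have [_ HQ1] := Ppos HL (ltnW H1d).
have Hq : (L %/ Pn n 1 < Qn n d 1)%N by rewrite ltn_divLR // mulnC (PQ (ltnW H1d)).
have Hi : (L %% Pn n 1 < Pn n 1)%N by rewrite ltn_pmod.
have EL : L = (L %% Pn n 1 + Pn n 1 * (L %/ Pn n 1))%N by rewrite addnC mulnC -divn_eq.
rewrite [in RHS]EL Zm_entry //; last by lia.
apply: eq_big_nat => a /andP[_ Ha]; congr (_ * _).
rewrite tpn_succ; last by rewrite (s_mid (ltnSn 0) H1d).
rewrite (sum_bound _ (erefl : s 0 = 1%N)) big_nat1 tpn0 mul1r G1_entry.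
have -> : ttidx n L 1 = (L %% Pn n 1)%N by rewrite /ttidx /= Pn0 divn1 Pn1.
by [].
Qed.


Definition n2 (f : nat -> C) := \sum_(0 <= L < Pn n d) `|f L| ^+ 2.

Lemma n2_ge0 f : 0 <= n2 f.
Proof. by apply: sumr_ge0 => L _; rewrite exprn_ge0. Qed.

Lemma n2_unf m f : (m <= d)%N -> n2 f = frob2 (mxof (Pn n m) (Qn n d m) f).
Proof.
move=> Hm; rewrite /n2 -(PQ Hm) sum_pq exchange_big_nat /frob2 big_mkord.
apply: eq_bigr => a _; rewrite big_mkord; apply: eq_bigr => b _.
by rewrite mxE.
Qed.

Section Bound.
Variable c : C.
Hypothesis HU : forall j, (1 <= j <= d.-1)%N -> adjmx (U j) *m U j = 1%:M.
Hypothesis Hc : forall j, (1 <= j <= d.-1)%N ->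
  frob2 (unfolding n d X j - U j *m adjmx (V j)) <= c.

Lemma Zt_bound t : (t < d.-1)%N -> n2 (fun L => X L - Zt t L) <= t.+1%:R * c.
Proof.
elim: t => [|t IH] Ht.
  rewrite (n2_unf _ (leq_pred d)) mxofB /= mxof_vecmx mul1r.
  by apply: Hc; rewrite leqnn andbT.
have Hm : (1 <= d.-1 - t.+1 <= d.-1)%N by lia.
rewrite (n2_unf (m := (d.-1 - t.+1)%N) _ (leq_trans (leq_subr _ _) (leq_pred d))) mxofB /= mxof_vecmx.
apply: le_trans (proj_step (HU Hm) _ _) _.
rewrite -natr1 mulrDl mul1r [in X in _ <= X]addrC; apply: lerD.
  apply: le_trans (proj_best (HU Hm) _ (adjmx (V (d.-1 - t.+1)))) _.
  exact: Hc.
rewrite -mxofB -(n2_unf (m := (d.-1 - t.+1)%N) _ (leq_trans (leq_subr _ _) (leq_pred d))).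
exact: IH (ltnW Ht).
Qed.
End Bound.

End Main.

Unset Implicit Arguments.
Set Strict Implicit.

Theorem theorem3p2 (C : numClosedFieldType) (d : nat) (n : nat -> nat)
  (r : nat -> nat) (X : nat -> C) (eps : C)
  (U : forall j, 'M[C]_(Pn n j, r j)) (V : forall j, 'M[C]_(Qn n d j, r j)) :
  (2 <= d)%N -> 0 < eps -> eps < 1 ->
  (forall j, (1 <= j <= d.-1)%N ->
     adjmx (U j) *m U j = 1%:M /\
     frobmx (unfolding n d X j - U j *m adjmx (V j))
       <= eps / sqrtC (d.-1)%:R * frobT n d X) ->
  frobT n d (fun L => X L - tteval n (rk d r) (thm_cores U V) d L)
    <= eps * frobT n d X.
Proof.
move=> Hd Heps _ H.
set F := frobT n d X.
set e := eps / sqrtC (d.-1)%:R * F.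
have HU : forall j, (1 <= j <= d.-1)%N -> adjmx (U j) *m U j = 1%:M.
  by move=> j Hj; case: (H j Hj).
have Hc : forall j, (1 <= j <= d.-1)%N ->
    frob2 (unfolding n d X j - U j *m adjmx (V j)) <= e ^+ 2.
  move=> j Hj; have [_ Hj2] := H j Hj.
  have Hs : 0 <= sqrtC (frob2 (unfolding n d X j - U j *m adjmx (V j))).
    by rewrite sqrtC_ge0 frob2_ge0.
  rewrite -[frob2 _]sqrtCK !expr2; apply: ler_pM => //.
have Ht : (d.-1.-1 < d.-1)%N by lia.
have Hb := Zt_bound Hd HU Hc Ht.
have HF : 0 <= F by rewrite /F /frobT sqrtC_ge0 sumr_ge0 // => L _; rewrite exprn_ge0.
have Hd1 : (d.-1)%:R != 0 :> C by rewrite pnatr_eq0 -lt0n; lia.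
have Ee : (d.-1.-1.+1)%:R * e ^+ 2 = (eps * F) ^+ 2.
  rewrite prednK; last by lia.
  rewrite /e !exprMn exprVn sqrtCK [eps ^+ 2 * _]mulrC !mulrA mulfV // mul1r.
  by rewrite expr2.
rewrite Ee in Hb.
have -> : frobT n d (fun L => X L - tteval n (rk d r) (thm_cores U V) d L) =
          sqrtC (n2 d n (fun L => X L - Zt U V d.-1.-1 L)).
  rewrite /frobT /n2 big_mkord; congr sqrtC; apply: eq_bigr => L _.
  by rewrite (tt_Z U V Hd (ltn_ord L)) /Zm subn1.
have Hep : 0 <= eps * F by rewrite mulr_ge0 // ltW.
rewrite -(sqrCK Hep) ler_sqrtC // qualifE /=; first exact: n2_ge0.
by rewrite exprn_ge0.
Qed.
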